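(* For the Adaptive-Threshold Dealer, let $\tau$ be a stage and $b$ a possible value of $\mathbf B^\tau$. Conditioned on $\mathbf B^\tau=b$, at every turn $t$ of stage $\tau+1$ (within the Adaptive phase), the number of mini-decks $i$ with $1\le x_{i,t}\le 4\ln(b)/\epsilon$ is at least $$\frac{\epsilon}{8}\cdot\frac{d}{\ln b}.$$
   Context: Adaptive-Threshold Dealer with $d$ mini-decks on $n$ cards ($d\mid n$): the deck is split into $d$ mini-decks, each a fixed ordered stack of $n/d$ cards. Let $L_{i,t}$ be the number of cards drawn from mini-deck $i$ before turn $t$. Adaptive phase (turns $t=1,\dots,n-2d$): repeatedly sample $i\in[d]$ uniformly until $L_{i,t}<\lceil t/d\rceil+1$, then draw the top card of mini-deck $i$. Holes at turn $t$: $x_{i,t}=\lceil t/d\rceil+1-L_{i,t}$. Stage $\tau\ge1$ consists of turns $(\tau-1)d+1,\dots,\tau d$. $\mathbf X_i^\tau=\tau+2-\mathbf L_i^\tau$, where $\mathbf L_i^\tau$ is the number of cards drawn from mini-deck $i$ in turns $1,\dots,\tau d$; $\mathbf X^0=(2,\dots,2)$. With $\epsilon=1/200$, $\Phi(x)=\sum_{i=1}^d(1+\epsilon)^{x_i}$ and $\mathbf B^\tau=\max\{\Phi(\mathbf X^\tau)/d,\ 16/\epsilon^2\}$. *)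

(* Defs.v *)
From HB Require Import structures.
From mathcomp Require Import all_boot all_order all_algebra.
From mathcomp Require Import reals exp.
Set Implicit Arguments. Unset Strict Implicit. Unset Printing Implicit Defensive.
Import Order.TTheory GRing.Theory Num.Theory.

(* A run of the Adaptive-Threshold Dealer is described by the sequence
   [s : nat -> 'I_d] of mini-decks drawn from: [s t] is the mini-deck whose
   top card is drawn at turn [t] (turns are numbered from 1; [s 0] is unused). *)

(* ceil (t / d), for d > 0 *)
Definition ceil_div (t d : nat) : nat := (t + d.-1) %/ d.

Definition Lcnt (d : nat) (s : nat -> 'I_d) (i : 'I_d) (t : nat) : nat :=
  \sum_(1 <= u < t) (s u == i : nat).

(* The threshold rule: at turn u the chosen mini-deck i satisfies
   L_{i,u} < ceil(u/d) + 1.  A run has positive probability up to turn T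
   iff every draw at turns 1..T obeys this rule. *)
Definition valid_run (d : nat) (s : nat -> 'I_d) (T : nat) : Prop :=
  forall u, (1 <= u <= T)%N -> (Lcnt s (s u) u < ceil_div u d + 1)%N.

Definition holes (d : nat) (s : nat -> 'I_d) (i : 'I_d) (t : nat) : int :=
  (ceil_div t d + 1)%:Z - (Lcnt s i t)%:Z.

(* X_i^tau = tau + 2 - L_i^tau, L_i^tau = draws from i in turns 1..tau*d. *)
Definition Xst (d : nat) (s : nat -> 'I_d) (tau : nat) (i : 'I_d) : int :=
  (tau + 2)%:Z - (Lcnt s i (tau * d + 1))%:Z.

Local Open Scope ring_scope.

Definition eps {R : realType} : R := 1 / 200.

Definition Phi {R : realType} (d : nat) (x : 'I_d -> int) : R :=
  \sum_(i < d) (1 + eps) ^ (x i).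

Definition Bst {R : realType} (d : nat) (s : nat -> 'I_d) (tau : nat) : R :=
  Num.max (Phi (Xst s tau) / d%:R) (16 / eps ^+ 2).

(* Main.v *)
Require Import Defs.
From HB Require Import structures.
From mathcomp Require Import all_boot all_order all_algebra.
From mathcomp Require Import reals exp.
From mathcomp Require Import sequences.
From mathcomp Require Import ring lra zify.
Import Order.TTheory GRing.Theory Num.Theory.

Lemma Lcnt_S d (s : nat -> 'I_d) i u : (0 < u)%N ->
  Lcnt s i u.+1 = (Lcnt s i u + (s u == i))%N.
Proof. by move=> hu; rewrite /Lcnt big_nat_recr. Qed.

Lemma Lcnt_le_S d (s : nat -> 'I_d) i u : (Lcnt s i u <= Lcnt s i u.+1)%N.
Proof.
case: u => [|u]; first by rewrite /Lcnt !big_geq.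
by rewrite (@Lcnt_S d s i u.+1) // leq_addr.
Qed.

Lemma Lcnt_mono d (s : nat -> 'I_d) i u v : (u <= v)%N -> (Lcnt s i u <= Lcnt s i v)%N.
Proof.
move=> /subnK <-; elim: (v - u)%N => [|k IH] //=.
by rewrite addSn; exact: leq_trans IH (Lcnt_le_S _ _ _ _).
Qed.

Lemma Lcnt_sum d (s : nat -> 'I_d) t : (\sum_(i < d) Lcnt s i t = t.-1)%N.
Proof.
rewrite /Lcnt exchange_big /=.
rewrite (eq_bigr (fun _ => 1%N)); last first.
  move=> u _; rewrite (bigD1 (s u)) //= eqxx big1 // => j /negPf.
  by rewrite eq_sym => ->.
rewrite sum_nat_const_nat muln1; case: t => // t; rewrite subn1 //=.
Qed.

Lemma ceil_mono u v d : (u <= v)%N -> (ceil_div u d <= ceil_div v d)%N.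
Proof. by move=> h; apply: leq_div2r; rewrite leq_add2r. Qed.

Lemma Lcnt_bound d (s : nat -> 'I_d) T i : valid_run s T ->
  forall u, (1 <= u <= T.+1)%N -> (Lcnt s i u <= ceil_div u.-1 d + 1)%N.
Proof.
move=> hv; elim=> [|u IH] //.
case: u IH => [|u] IH /andP [_ h2].
  by rewrite /Lcnt big_geq.
rewrite Lcnt_S //.
have hvu := hv u.+1 h2.
case: eqP => [<-|_].
  by rewrite (_ : nat_of_bool true = 1%N) // addn1.
rewrite addn0; apply: leq_trans (IH _) _; first by apply/andP; split => //; lia.
by rewrite leq_add2r; apply: ceil_mono.
Qed.
Local Open Scope ring_scope.

Lemma eps_val {R : realType} : (eps : R) = 1/200.
Proof. by []. Qed.

Lemma ln1eps {R : realType} : 1/201 <= ln (1 + eps : R).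
Proof.
have h := @le_ln1Dx R (- (1/201)).
have e : 1 + - (1/201) = (1 + eps : R)^-1 by rewrite eps_val; field.
rewrite e lnV in h; last by rewrite posrE eps_val; lra.
move: h; lra.
Qed.

Lemma core {R : realType} (b : R) (m : nat) : 1206 <= b ->
  4 * ln b / eps < m%:R -> 2 * b * m%:R <= (1 + eps) ^+ m.
Proof.
move=> hb hm.
have lb : 0 < ln b by apply: ln_gt0; lra.
have ha := @ln1eps R.
set a := ln (1 + eps) in ha.
have hz : 3 * ln b <= m%:R * a.
  move: hm; rewrite eps_val => hm.
  have e : 4 * ln b / (1/200) = 800 * ln b :> R by field.
  rewrite e in hm.
  have m0 : 0 <= m%:R :> R by [].
  nra.
have -> : (1 + eps) ^+ m = expR (m%:R * a).
  by rewrite expRM_natl /a lnK // posrE eps_val; lra.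
set z := m%:R * a in hz *.
have -> : z = 2 * ln b + (z - 2 * ln b) by ring.
rewrite expRD.
have -> : expR (2 * ln b) = b ^+ 2 by rewrite (expRM_natl 2) lnK // posrE; lra.
have h1 := expR_ge1Dx (z - 2 * ln b).
have hmz : m%:R <= 201 * z.
  rewrite /z; have m0 : 0 <= m%:R :> R by []. nra.
have z0 : 0 <= z by nra.
set E := expR _ in h1 *.
have hE : z / 3 <= E by lra.
have b0 : 0 <= b by lra.
have s1 : 2 * b * m%:R <= 402 * b * z by nra.
have s2 : 402 * b * z <= b ^+ 2 * (z / 3).
  rewrite expr2.
  have bz := mulr_ge0 b0 z0.
  have q : 0 <= b * z * (b - 1206) by apply: mulr_ge0 => //; lra.
  nra.
have s3 : b ^+ 2 * (z / 3) <= b ^+ 2 * E by apply: ler_wpM2l => //; rewrite sqr_ge0.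
lra.
Qed.

Theorem claim3p10 (R : realType) (n d : nat) (hd : (0 < d)%N) (hdn : (d %| n)%N)
  (s : nat -> 'I_d) (tau : nat) (b : R) (t : nat) :
  (1 <= tau)%N ->
  (tau * d + 1 <= t <= (tau + 1) * d)%N ->
  (1 <= t <= n - 2 * d)%N ->
  valid_run s t.-1 ->
  Bst s tau = b ->
  (eps / 8) * (d%:R / ln b) <=
    (#|[set i : 'I_d | (1 <= holes s i t)%R &&
                       ((holes s i t)%:~R <= 4 * ln b / eps :> R)]|)%:R.
Proof.
move=> htau /andP [ht1 ht2] /andP [ht0 _] hv hB.
have ceq : ceil_div t d = tau.+1.
  rewrite /ceil_div; apply/eqP; rewrite eqn_leq -ltnS ltn_divLR // leq_divRL //; apply/andP; split; lia.
have cle : (ceil_div t.-1 d <= tau.+1)%N by rewrite -ceq; apply: ceil_mono; lia.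
have lle : forall i, (Lcnt s i t <= tau + 2)%N.
  move=> i; have h := @Lcnt_bound d s t.-1 i hv t; rewrite prednK in h; last by [].
  have := h (ltac:(apply/andP; split => //)); lia.
have lXle : forall i, (Lcnt s i (tau * d + 1) <= Lcnt s i t)%N.
  by move=> i; apply: Lcnt_mono.
set xn := fun i => (tau + 2 - Lcnt s i t)%N.
set Xn := fun i => (tau + 2 - Lcnt s i (tau * d + 1))%N.
have xX : forall i, (xn i <= Xn i)%N by move=> i; rewrite /xn /Xn; have := lXle i; lia.
have Hh : forall i, holes s i t = (xn i)%:Z.
  move=> i; rewrite /holes ceq /xn; have := lle i => h.
  have -> : (tau.+1 + 1 = tau + 2)%N by lia.
  by rewrite subzn.
have HX : forall i, Xst s tau i = (Xn i)%:Z.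
  move=> i; rewrite /Xst /Xn; have := lle i; have := lXle i => h1 h2.
  by rewrite subzn //; apply: leq_trans h1 h2.
have sumx : (d + 1 <= \sum_(i < d) xn i)%N.
  have e : (\sum_(i < d) xn i + \sum_(i < d) Lcnt s i t = \sum_(i < d) (tau + 2))%N.
    rewrite -big_split /=; apply: eq_bigr => i _; rewrite /xn subnK //.
  move: e; rewrite Lcnt_sum sum_nat_const card_ord.
  have : (t.-1 + 1 = t)%N by lia.
  nia.
have hPhi : Phi (Xst s tau) / d%:R <= b by rewrite -hB /Bst le_max lexx.
have hb16 : (16 / eps ^+ 2 : R) <= b by rewrite -hB /Bst le_max lexx orbT.
have hb : (1206 : R) <= b.
  apply: le_trans hb16.
  rewrite ler_pdivlMr; last by rewrite exprn_gt0 // eps_val; lra.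
  rewrite eps_val expr2; lra.
have lb : 0 < ln b by apply: ln_gt0; lra.
have b0 : 0 < b by lra.
set K : R := 4 * ln b / eps.
have K0 : 0 < K by rewrite /K eps_val; apply: divr_gt0; lra.
set A := [set i : 'I_d | _].
have inA : forall i, (i \in A) = (0 < xn i)%N && ((xn i)%:R <= K).
  by move=> i; rewrite inE Hh.
have hPhi' : Phi (R:=R) (Xst s tau) = \sum_(i < d) (1 + eps) ^+ Xn i.
  by rewrite /Phi; apply: eq_bigr => i _; rewrite HX.
have dpos : (0 : R) < d%:R by rewrite ltr0n.
have sumP : \sum_(i < d) (1 + eps) ^+ Xn i <= b * d%:R.
  by rewrite -hPhi' -ler_pdivrMr.
have key : (d%:R + 1 : R) <= #|A|%:R * K + d%:R / 2.
  have s1 : (d%:R + 1 : R) <= \sum_(i < d) (xn i)%:R.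
    rewrite -natr_sum -[1]/(1%:R) -natrD ler_nat; exact: sumx.
  rewrite (bigID (fun i => i \in A)) /= in s1.
  have s2 : \sum_(i < d | i \in A) (xn i)%:R <= #|A|%:R * K.
    rewrite [X in _ <= X](_ : _ = \sum_(i in A) K); last by rewrite sumr_const mulr_natl.
    by apply: ler_sum => i; rewrite inA => /andP [].
  have s3 : \sum_(i < d | i \notin A) ((xn i)%:R : R)
            <= \sum_(i < d) (1 + eps) ^+ Xn i / (2 * b).
    apply: le_trans (_ : _ <= \sum_(i < d | i \notin A) (1 + eps) ^+ Xn i / (2 * b)) _.
      apply: ler_sum => i; rewrite inA negb_and -leqNgt -ltNge leqn0 => /orP [/eqP ->|hK].
        by apply: divr_ge0; [apply: exprn_ge0; rewrite eps_val; lra | lra].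
      have hX : K < (Xn i)%:R by apply: lt_le_trans hK _; rewrite ler_nat.
      have hc := @core R b (Xn i) hb hX.
      rewrite ler_pdivlMr; last lra.
      apply: le_trans hc.
      have : ((xn i)%:R <= (Xn i)%:R :> R) by rewrite ler_nat.
      nra.
    rewrite [X in _ <= X](bigID (fun i => i \in A)) /= lerDr.
    apply: sumr_ge0 => i _.
    by apply: divr_ge0; [apply: exprn_ge0; rewrite eps_val; lra | lra].
  have s4 : \sum_(i < d) (1 + eps) ^+ Xn i / (2 * b) <= d%:R / 2.
    rewrite -mulr_suml ler_pdivrMr; last lra.
    have -> : d%:R / 2 * (2 * b) = b * d%:R by field.
    exact: sumP.
  lra.
have -> : eps / 8 * (d%:R / ln b) = (d%:R / 2) / K.
  by rewrite /K eps_val; field; rewrite gt_eqF.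
rewrite ler_pdivrMr //.
lra.
Qed.
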